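(* Suppose that a concave kite central configuration of the planar Newtonian 4-body problem has two pairs of equal masses, with mass values $1$ and $m>0$. Then one pair of equal masses lies at the endpoints of the base of an isosceles triangle, and the other pair lies on the symmetry axis of the base, with one body of this pair inside the triangle formed by the other three bodies.
   Context: Bodies with positive masses $m_i$ at positions $q_i\in\mathbb{R}^2$, $i=1,\dots,4$, with $r_{ij}=|q_i-q_j|$. A configuration is a central configuration if there is a constant $\lambda$ with $-\lambda m_j(q_j-c)=\sum_{i\neq j} m_im_j(q_i-q_j)/r_{ij}^3$ for all $j$, where $c=\sum m_iq_i/\sum m_i$. A non-collinear configuration is a kite if it has a symmetry axis passing through two of the four bodies; it is concave if one body lies inside the triangle formed by the other three. *)

(* Defs.v *)
From mathcomp Require Import all_boot all_order all_algebra.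
From mathcomp Require Import reals.
Set Implicit Arguments. Unset Strict Implicit. Unset Printing Implicit Defensive.
Import Order.TTheory GRing.Theory Num.Theory.
Local Open Scope ring_scope.

Section FourBody.
Variable R : realType.

Definition pt := 'rV[R]_2.

Definition dot (u v : pt) : R := \sum_(k < 2) u 0 k * v 0 k.
Definition dist (u v : pt) : R := Num.sqrt (dot (u - v) (u - v)).

Definition cmass (mass : 'I_4 -> R) (q : 'I_4 -> pt) : pt :=
  (\sum_(i < 4) mass i)^-1 *: \sum_(i < 4) (mass i *: q i).

Definition central_config (mass : 'I_4 -> R) (q : 'I_4 -> pt) : Prop :=
  exists lambda : R, forall j : 'I_4,
    - (lambda * mass j) *: (q j - cmass mass q) =
    \sum_(i < 4 | i != j) ((mass i * mass j) / dist (q i) (q j) ^+ 3) *: (q i - q j).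

Definition collinear_config (q : 'I_4 -> pt) : Prop :=
  exists (p d : pt), d != 0 /\ forall i : 'I_4, exists t : R, q i = p + t *: d.

Definition reflect_line (a b p : pt) : pt :=
  let d := b - a in
  a + ((2 * dot (p - a) d / dot d d) *: d - (p - a)).

Definition kite (q : 'I_4 -> pt) : Prop :=
  ~ collinear_config q /\
  exists a b : 'I_4, q a != q b /\
    forall i : 'I_4, exists j : 'I_4, reflect_line (q a) (q b) (q i) = q j.

Definition in_triangle (p x y z : pt) : Prop :=
  exists s t u : R, 0 < s /\ 0 < t /\ 0 < u /\ s + t + u = 1 /\
    p = s *: x + t *: y + u *: z.

Definition concave (q : 'I_4 -> pt) : Prop :=
  exists i j k l : 'I_4, uniq [:: i; j; k; l] /\ in_triangle (q l) (q i) (q j) (q k).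

End FourBody.

(* Main.v *)
Require Import Defs.
From mathcomp Require Import all_boot all_order all_algebra.
From mathcomp Require Import reals.
From mathcomp Require Import ring lra.
Import Order.TTheory GRing.Theory Num.Theory.

Local Open Scope ring_scope.

Lemma uniq4P {a b c d : 'I_4} : uniq [:: a; b; c; d] ->
  (a != b) && (a != c) && (a != d) && (b != c) && (b != d) && (c != d).
Proof. by rewrite /= !inE !negb_or => /and4P [/and3P[-> -> ->] /andP[-> ->] -> _]. Qed.

Lemma uniq4 (a b c d : 'I_4) : a != b -> a != c -> a != d -> b != c -> b != d -> c != d ->
  uniq [:: a; b; c; d].
Proof. by move=> ab ac ad bc bd cd; rewrite /= !inE !negb_or ab ac ad bc bd cd. Qed.

Lemma cover4 (a b c d x : 'I_4) : uniq [:: a; b; c; d] ->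
  x = a \/ x = b \/ x = c \/ x = d.
Proof.
move=> Hu.
have Hc : #|[:: a; b; c; d]| = #|predT : {pred 'I_4}|.
  by rewrite (card_uniqP Hu) /= cardT size_enum_ord.
have /(subset_cardP Hc) E : [:: a; b; c; d] \subset (predT : {pred 'I_4}).
  by apply/subsetP.
have : x \in [:: a; b; c; d] by rewrite E.
by rewrite !inE => /or4P [/eqP|/eqP|/eqP|/eqP]; auto.
Qed.

Lemma sum4 (V : zmodType) {a b c d : 'I_4} (F : 'I_4 -> V) : uniq [:: a; b; c; d] ->
  \sum_(i < 4) F i = F a + F b + F c + F d.
Proof.
move=> Hu.
have P : perm_eq [:: a; b; c; d] (enum 'I_4).
  apply: uniq_perm => //; first exact: enum_uniq.
  move=> x; rewrite mem_enum; have := @cover4 a b c d x Hu.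
  by rewrite !inE => [[->|[->|[->|->]]]]; rewrite eqxx ?orbT.
have -> : \sum_(i < 4) F i = \sum_(i <- enum 'I_4) F i by rewrite big_enum.
rewrite -(perm_big _ P) !big_cons big_nil /=. by rewrite addr0 !addrA.
Qed.

Lemma sum4n (V : zmodType) {a b c d : 'I_4} (F : 'I_4 -> V) : uniq [:: a; b; c; d] ->
  \sum_(i < 4 | i != a) F i = F b + F c + F d.
Proof.
move=> Hu; rewrite big_mkcond (sum4 _ _ Hu) /= eqxx add0r.
by move: (uniq4P Hu) => /andP[/andP[/andP[/andP[/andP[ab ac] ad] _] _] _]; rewrite eq_sym ab eq_sym ac eq_sym ad.
Qed.

Section Geo.
Variable R : realType.
Implicit Types (u v p : 'rV[R]_2).

Lemma dotE u v : dot u v = u 0 0 * v 0 0 + u 0 1 * v 0 1.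
Proof. by rewrite /dot big_ord_recr big_ord1 /=; congr (u 0 _ * v 0 _ + u 0 _ * v 0 _); apply/val_inj. Qed.

Lemma distE u v : dist u v = Num.sqrt ((u 0 0 - v 0 0) ^+ 2 + (u 0 1 - v 0 1) ^+ 2).
Proof. by rewrite /dist dotE !mxE !expr2. Qed.

Lemma pt_eq u v : u 0 0 = v 0 0 -> u 0 1 = v 0 1 -> u = v.
Proof.
move=> h0 h1; apply/rowP => k; case: k => [[|[|//]] Hk].
  by rewrite (_ : Ordinal Hk = 0) //; apply/val_inj.
by rewrite (_ : Ordinal Hk = 1) //; apply/val_inj.
Qed.

Definition Lf (n1 n2 : R) v := n1 * v 0 0 + n2 * v 0 1.

Lemma LfD n1 n2 u v : Lf n1 n2 (u + v) = Lf n1 n2 u + Lf n1 n2 v.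
Proof. rewrite /Lf !mxE; ring. Qed.
Lemma LfB n1 n2 u v : Lf n1 n2 (u - v) = Lf n1 n2 u - Lf n1 n2 v.
Proof. rewrite /Lf !mxE; ring. Qed.
Lemma LfZ n1 n2 c v : Lf n1 n2 (c *: v) = c * Lf n1 n2 v.
Proof. rewrite /Lf !mxE; ring. Qed.
Lemma LfN n1 n2 v : Lf n1 n2 (- v) = - Lf n1 n2 v.
Proof. rewrite /Lf !mxE; ring. Qed.

Lemma tri_le n1 n2 K p x y z : in_triangle p x y z ->
  Lf n1 n2 x <= K -> Lf n1 n2 y <= K -> Lf n1 n2 z <= K -> Lf n1 n2 p <= K.
Proof.
move=> [s [t [u [s0 [t0 [u0 [e ->]]]]]]] hx hy hz.
rewrite !LfD !LfZ.
have -> : K = s * K + t * K + u * K by rewrite -!mulrDl e mul1r.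
rewrite lerD ?ler_pM2l //.
by rewrite lerD // ler_pM2l.
Qed.

Lemma sw12 p x y z : in_triangle p x y z -> in_triangle p y x z.
Proof.
move=> [s [t [u [s0 [t0 [u0 [e ->]]]]]]]; exists t, s, u; do !split => //.
  by rewrite (addrC t).
by rewrite (addrC (t *: y)).
Qed.

Lemma sw23 p x y z : in_triangle p x y z -> in_triangle p x z y.
Proof.
move=> [s [t [u [s0 [t0 [u0 [e ->]]]]]]]; exists s, u, t; do !split => //.
  by rewrite -addrA (addrC u) addrA.
by rewrite -!addrA (addrC (t *: y)).
Qed.

 

Lemma refl_real (a1 a2 b1 b2 p1 p2 al : R) :
  al * ((b1 - a1) ^+ 2 + (b2 - a2) ^+ 2) = 2 * ((p1 - a1) * (b1 - a1) + (p2 - a2) * (b2 - a2)) ->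
  [/\ (- (b2 - a2)) * (a1 + al * (b1 - a1) - (p1 - a1)) + (b1 - a1) * (a2 + al * (b2 - a2) - (p2 - a2))
       - ((- (b2 - a2)) * a1 + (b1 - a1) * a2)
     = - ((- (b2 - a2)) * p1 + (b1 - a1) * p2 - ((- (b2 - a2)) * a1 + (b1 - a1) * a2)),
    (a1 + al * (b1 - a1) - (p1 - a1) - a1) ^+ 2 + (a2 + al * (b2 - a2) - (p2 - a2) - a2) ^+ 2
     = (p1 - a1) ^+ 2 + (p2 - a2) ^+ 2 &
    (a1 + al * (b1 - a1) - (p1 - a1) - b1) ^+ 2 + (a2 + al * (b2 - a2) - (p2 - a2) - b2) ^+ 2
     = (p1 - b1) ^+ 2 + (p2 - b2) ^+ 2].
Proof.
move=> h.
have E : al * (al * ((b1 - a1) ^+ 2 + (b2 - a2) ^+ 2) - 2 * ((p1 - a1) * (b1 - a1) + (p2 - a2) * (b2 - a2))) = 0.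
  by rewrite h subrr mulr0.
have E2 : (al - 2) * (al * ((b1 - a1) ^+ 2 + (b2 - a2) ^+ 2) - 2 * ((p1 - a1) * (b1 - a1) + (p2 - a2) * (b2 - a2))) = 0.
  by rewrite h subrr mulr0.
split.
- ring.
- apply/eqP; rewrite -subr_eq0 -E; apply/eqP; ring.
- apply/eqP; rewrite -subr_eq0 -E2; apply/eqP; ring.
Qed.
Definition sqd u v := (u 0 0 - v 0 0) ^+ 2 + (u 0 1 - v 0 1) ^+ 2.
Lemma refl_vec A B P Q : sqd B A != 0 -> reflect_line A B P = Q ->
  [/\ Lf (- (B 0 1 - A 0 1)) (B 0 0 - A 0 0) Q - Lf (- (B 0 1 - A 0 1)) (B 0 0 - A 0 0) A
      = - (Lf (- (B 0 1 - A 0 1)) (B 0 0 - A 0 0) P - Lf (- (B 0 1 - A 0 1)) (B 0 0 - A 0 0) A),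
      sqd Q A = sqd P A & sqd Q B = sqd P B].
Proof.
rewrite /sqd => hN <-.
set al := 2 * dot (P - A) (B - A) / dot (B - A) (B - A).
have ck : forall k, reflect_line A B P 0 k = A 0 k + al * (B 0 k - A 0 k) - (P 0 k - A 0 k).
  by move=> k; rewrite /reflect_line !mxE addrA.
have h : al * ((B 0 0 - A 0 0) ^+ 2 + (B 0 1 - A 0 1) ^+ 2) =
   2 * ((P 0 0 - A 0 0) * (B 0 0 - A 0 0) + (P 0 1 - A 0 1) * (B 0 1 - A 0 1)).
  rewrite /al !dotE !mxE; field.
  by move: hN; rewrite !expr2.
have [h1 h2 h3] := refl_real _ _ _ _ _ _ _ h.
by rewrite /Lf !ck; split.
Qed.
Lemma key (lam mx my mz mw M LX LY LZ LW t uy u : R) : M != 0 -> M = mx + my + mz + mw ->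
  LY = LX -> LZ = LX + t -> LW = LX - t ->
  -(lam * mx) * (LX - M^-1 * (mx * LX + my * LY + mz * LZ + mw * LW)) =
    my * mx * uy * (LY - LX) + mz * mx * u * (LZ - LX) + mw * mx * u * (LW - LX) ->
  mx * (mz - mw) * t * (lam * M^-1 - u) = 0.
Proof.
move=> hM eM -> -> -> h.
have E : M^-1 * (mx * LX + my * LX + mz * (LX + t) + mw * (LX - t)) = LX + M^-1 * ((mz - mw) * t).
  rewrite eM in hM *; field; exact: hM.
rewrite E in h.
move/eqP: h; rewrite -subr_eq0 => /eqP h; rewrite -h; ring.
Qed.

Lemma ccL (mass : 'I_4 -> R) (q : 'I_4 -> 'rV[R]_2) lam x y z w n1 n2 :
  uniq [:: x; y; z; w] ->
  - (lam * mass x) *: (q x - cmass mass q) =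
    \sum_(i < 4 | i != x) ((mass i * mass x) / dist (q i) (q x) ^+ 3) *: (q i - q x) ->
  - (lam * mass x) * (Lf n1 n2 (q x) - (\sum_(i < 4) mass i)^-1 *
     (mass x * Lf n1 n2 (q x) + mass y * Lf n1 n2 (q y) + mass z * Lf n1 n2 (q z)
        + mass w * Lf n1 n2 (q w))) =
  mass y * mass x / dist (q y) (q x) ^+ 3 * (Lf n1 n2 (q y) - Lf n1 n2 (q x)) +
  mass z * mass x / dist (q z) (q x) ^+ 3 * (Lf n1 n2 (q z) - Lf n1 n2 (q x)) +
  mass w * mass x / dist (q w) (q x) ^+ 3 * (Lf n1 n2 (q w) - Lf n1 n2 (q x)).
Proof.
move=> Hu /(congr1 (Lf n1 n2)).
rewrite (sum4n _ _ Hu) /cmass (sum4 _ (fun i => mass i *: q i) Hu).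
by rewrite !LfD !LfZ !LfB !LfZ !LfD !LfZ.
Qed.

Implicit Types (A B X : 'rV[R]_2).
Lemma sqd0 u v : sqd u v = 0 -> u = v.
Proof.
rewrite /sqd => h.
have h1 : (u 0 0 - v 0 0) ^+ 2 = 0.
  by apply/eqP; rewrite eq_le sqr_ge0 andbT -h lerDl sqr_ge0.
have h2 : (u 0 1 - v 0 1) ^+ 2 = 0 by move: h; rewrite h1 add0r.
move/eqP: h1; rewrite sqrf_eq0 subr_eq0 => /eqP h1.
move/eqP: h2; rewrite sqrf_eq0 subr_eq0 => /eqP h2.
exact: pt_eq.
Qed.

Lemma sqdC u v : sqd u v = sqd v u.
Proof. rewrite /sqd; ring. Qed.

Lemma sqd_ge0 u v : 0 <= sqd u v.
Proof. by rewrite /sqd addr_ge0 ?sqr_ge0. Qed.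

Lemma distE' u v : dist u v = Num.sqrt (sqd u v).
Proof. by rewrite distE. Qed.

Lemma LfS c n1 n2 v : Lf (c * n1) (c * n2) v = c * Lf n1 n2 v.
Proof. rewrite /Lf; ring. Qed.

Lemma LfBA A B : Lf (- (B 0 1 - A 0 1)) (B 0 0 - A 0 0) B = Lf (- (B 0 1 - A 0 1)) (B 0 0 - A 0 0) A.
Proof. rewrite /Lf; ring. Qed.

Lemma LfBA' A B : Lf (B 0 0 - A 0 0) (B 0 1 - A 0 1) B - Lf (B 0 0 - A 0 0) (B 0 1 - A 0 1) A = sqd B A.
Proof. rewrite /Lf /sqd; ring. Qed.

Lemma mid_lf A B X : sqd X A = sqd X B ->
  Lf (B 0 0 - A 0 0) (B 0 1 - A 0 1) X - Lf (B 0 0 - A 0 0) (B 0 1 - A 0 1) A = sqd B A / 2.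
Proof.
move=> h.
have E : sqd X B = sqd X A - 2 * (Lf (B 0 0 - A 0 0) (B 0 1 - A 0 1) X - Lf (B 0 0 - A 0 0) (B 0 1 - A 0 1) A) + sqd B A.
  rewrite /sqd /Lf; ring.
rewrite h in E.
have : 2 * (Lf (B 0 0 - A 0 0) (B 0 1 - A 0 1) X - Lf (B 0 0 - A 0 0) (B 0 1 - A 0 1) A) = sqd B A.
  by move: E; set s := Lf _ _ X - _; move=> E; apply/eqP; rewrite -subr_eq0; apply/eqP; move: E; lra.
by move=> <-; field.
Qed.

Lemma colpt A B X : sqd B A != 0 ->
  Lf (- (B 0 1 - A 0 1)) (B 0 0 - A 0 0) X - Lf (- (B 0 1 - A 0 1)) (B 0 0 - A 0 0) A = 0 ->
  exists t, X = A + t *: (B - A).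
Proof.
rewrite /sqd /Lf => hN h.
exists (((X 0 0 - A 0 0) * (B 0 0 - A 0 0) + (X 0 1 - A 0 1) * (B 0 1 - A 0 1)) / sqd B A).
apply: pt_eq; rewrite !mxE; apply/eqP; rewrite -subr_eq0; apply/eqP.
- have -> : X 0 0 - (A 0 0 + ((X 0 0 - A 0 0) * (B 0 0 - A 0 0) + (X 0 1 - A 0 1) * (B 0 1 - A 0 1)) / sqd B A * (B 0 0 - A 0 0))
     = (B 0 1 - A 0 1) * (- (- (B 0 1 - A 0 1) * X 0 0 + (B 0 0 - A 0 0) * X 0 1 - (- (B 0 1 - A 0 1) * A 0 0 + (B 0 0 - A 0 0) * A 0 1))) / sqd B A.
    by rewrite /sqd; field.
  by rewrite h oppr0 mulr0 mul0r.
- have -> : X 0 1 - (A 0 1 + ((X 0 0 - A 0 0) * (B 0 0 - A 0 0) + (X 0 1 - A 0 1) * (B 0 1 - A 0 1)) / sqd B A * (B 0 1 - A 0 1))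
     = (B 0 0 - A 0 0) * ((- (B 0 1 - A 0 1) * X 0 0 + (B 0 0 - A 0 0) * X 0 1 - (- (B 0 1 - A 0 1) * A 0 0 + (B 0 0 - A 0 0) * A 0 1))) / sqd B A.
    by rewrite /sqd; field.
  by rewrite h mulr0 mul0r.
Qed.
End Geo.

Lemma ext2 (a b : 'I_4) : a != b -> exists c d, uniq [:: a; b; c; d].
Proof.
case: a => [[|[|[|[|//]]]] Ha]; case: b => [[|[|[|[|//]]]] Hb] //= _;
  first [ (exists (@Ordinal 4 0 isT), (@Ordinal 4 1 isT); by [])
        | (exists (@Ordinal 4 0 isT), (@Ordinal 4 2 isT); by [])
        | (exists (@Ordinal 4 0 isT), (@Ordinal 4 3 isT); by [])
        | (exists (@Ordinal 4 1 isT), (@Ordinal 4 2 isT); by [])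
        | (exists (@Ordinal 4 1 isT), (@Ordinal 4 3 isT); by [])
        | (exists (@Ordinal 4 2 isT), (@Ordinal 4 3 isT); by []) ].
Qed.
Arguments sqd {R}. Arguments Lf {R}. Arguments refl_vec {R A B P Q}.
Arguments colpt {R A B X}. Arguments ccL {R}.
Arguments key {R lam mx my mz mw M LX LY LZ LW t uy u}.
Arguments tri_le {R n1 n2 K p x y z}. Arguments mid_lf {R A B X}.
Arguments sqd0 {R u v}. Arguments LfBA {R}. Arguments LfBA' {R}.
Arguments sw12 {R p x y z}. Arguments sw23 {R p x y z}.
Arguments sqdC {R}. Arguments distE' {R}. Arguments LfS {R}.
Arguments pt_eq {R u v}. Arguments sqd_ge0 {R}.

Lemma sqdxx (R : realType) (u : 'rV[R]_2) : sqd u u = 0.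
Proof. by rewrite /sqd !subrr expr0n /= addr0. Qed.
Arguments sqdxx {R}.

Ltac tri_solve H := first [exact H | exact (sw12 H) | exact (sw23 H) | exact (sw12 (sw23 H))
  | exact (sw23 (sw12 H)) | exact (sw12 (sw23 (sw12 H)))].

Theorem proposition1 (R : realType) (m : R) (mass : 'I_4 -> R)
    (q : 'I_4 -> 'rV[R]_2) :
  0 < m ->
  (exists i j k l : 'I_4, uniq [:: i; j; k; l] /\
     mass i = 1 /\ mass j = 1 /\ mass k = m /\ mass l = m) ->
  (forall i j : 'I_4, i != j -> q i != q j) ->
  central_config mass q -> kite q -> concave q ->
  exists i j k l : 'I_4, uniq [:: i; j; k; l] /\
    mass i = mass j /\ mass k = mass l /\
    dist (q k) (q i) = dist (q k) (q j) /\
    dist (q l) (q i) = dist (q l) (q j) /\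
    in_triangle (q l) (q i) (q j) (q k).
Proof.
move=> m0 [i0 [j0 [k0 [l0 [Hu0 [mi [mj [mk ml]]]]]]]] Hdist [lam Hcc]
  [Hncol [a [b [Hab Hrefl]]]] [i [j [k [l [Hu Htri]]]]].
have ab : a != b by apply: contraNneq Hab => ->.
have [c [d Hu4]] := @ext2 a b ab.
move: (uniq4P Hu4) => /andP[/andP[/andP[/andP[/andP[_ ac] ad] bc] bd] cd].
have Hneq : forall x y, x != y -> sqd (q x) (q y) != 0.
  by move=> x y /Hdist; apply: contra => /eqP /sqd0 ->.
have hN : sqd (q b) (q a) != 0 by apply: Hneq; rewrite eq_sym.
pose L := Lf (- (q b 0 1 - q a 0 1)) (q b 0 0 - q a 0 0).
have RX : forall x, x != a -> x != b ->
    exists y, [/\ reflect_line (q a) (q b) (q x) = q y, y != a & y != b].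
  move=> x xa xb; have [y hy] := Hrefl x; exists y; split => //; apply/eqP => e; subst y.
    have [_ h2 _] := refl_vec hN hy.
    by move: (Hneq x a xa); rewrite -h2 sqdxx eqxx.
  have [_ _ h3] := refl_vec hN hy.
  by move: (Hneq x b xb); rewrite -h3 sqdxx eqxx.
have hcol : L (q c) - L (q a) = 0 -> L (q d) - L (q a) = 0 -> False.
  move=> h1 h2; apply: Hncol; exists (q a), (q b - q a); split.
    by rewrite subr_eq0 eq_sym.
  move=> x; apply: (colpt hN).
  have := @cover4 a b c d x Hu4 => [[->|[->|[->|->]]]] //.
  - exact: subrr.
  - by rewrite LfBA subrr.
have ca : c != a by rewrite eq_sym.
have cb : c != b by rewrite eq_sym.
have da : d != a by rewrite eq_sym.
have db : d != b by rewrite eq_sym.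
have [y [hy ya yb]] := RX c ca cb.
have yd : y = d.
  have := @cover4 a b c d y Hu4 => [[e|[e|[e|e]]]] //; subst y.
  - by rewrite eqxx in ya.
  - by rewrite eqxx in yb.
  have [h1 _ _] := refl_vec hN hy.
  have t0 : L (q c) - L (q a) = 0.
    by move: h1; rewrite -/L => h1; lra.
  have [y' [hy' ya' yb']] := RX d da db.
  have := @cover4 a b c d y' Hu4 => [[e|[e|[e|e]]]] //; subst y'.
  - by rewrite eqxx in ya'.
  - by rewrite eqxx in yb'.
  - have [h1' _ _] := refl_vec hN hy'.
    by exfalso; apply: hcol => //; move: h1'; rewrite -/L => h1'; lra.
  - have [h1' _ _] := refl_vec hN hy'.
    by exfalso; apply: hcol => //; move: h1'; rewrite -/L => h1'; lra.
subst y.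
have [hL hsA hsB] := refl_vec hN hy.
rewrite -/L in hL.
have tC0 : L (q c) - L (q a) != 0.
  by apply/eqP => h; apply: hcol => //; lra.
have tsq : 0 < (L (q c) - L (q a)) ^+ 2 by rewrite exprn_even_gt0 //= tC0 orbT.
have LbA : L (q b) = L (q a) by rewrite /L LfBA.
move: (uniq4P Hu) => /andP[/andP[/andP[/andP[/andP[ij ik] il] jk] jl] kl].
have HT : in_triangle (q b) (q c) (q d) (q a) \/ in_triangle (q a) (q c) (q d) (q b).
  have := @cover4 a b c d l Hu4 => [[e|[e|[e|e]]]]; subst l.
  - right.
    have := @cover4 a b c d i Hu4 => [[e|[e|[e|e]]]]; subst i;
    have := @cover4 a b c d j Hu4 => [[e|[e|[e|e]]]]; subst j;
    have := @cover4 a b c d k Hu4 => [[e|[e|[e|e]]]]; subst k;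
    move: Hu; rewrite /= !inE ?eqxx ?orbT /= ?andbF // => _; tri_solve Htri.
  - left.
    have := @cover4 a b c d i Hu4 => [[e|[e|[e|e]]]]; subst i;
    have := @cover4 a b c d j Hu4 => [[e|[e|[e|e]]]]; subst j;
    have := @cover4 a b c d k Hu4 => [[e|[e|[e|e]]]]; subst k;
    move: Hu; rewrite /= !inE ?eqxx ?orbT /= ?andbF // => _; tri_solve Htri.
  - exfalso.
    pose t := L (q c) - L (q a).
    have bnd : forall x, x != c -> Lf (t * - (q b 0 1 - q a 0 1)) (t * (q b 0 0 - q a 0 0)) (q x) <= t * L (q a).
      move=> x xc; rewrite LfS -/L.
      have := @cover4 a b c d x Hu4 => [[e|[e|[e|e]]]]; subst x => //.
      - by rewrite LbA.
      - by rewrite eqxx in xc.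
      - have -> : L (q d) = L (q a) - t by rewrite /t; lra.
        rewrite /t; nra.
    have := tri_le Htri (bnd _ il) (bnd _ jl) (bnd _ kl).
    rewrite LfS -/L /t; nra.
  - exfalso.
    pose t := L (q c) - L (q a).
    have bnd : forall x, x != d -> Lf (- t * - (q b 0 1 - q a 0 1)) (- t * (q b 0 0 - q a 0 0)) (q x) <= - t * L (q a).
      move=> x xd; rewrite LfS -/L.
      have := @cover4 a b c d x Hu4 => [[e|[e|[e|e]]]]; subst x => //.
      - by rewrite LbA.
      - rewrite /t; nra.
      - by rewrite eqxx in xd.
    have := tri_le Htri (bnd _ il) (bnd _ jl) (bnd _ kl).
    rewrite LfS -/L.
    have -> : L (q d) = L (q a) - t by rewrite /t; lra.
    rewrite /t; nra.
have mval : forall x, mass x = 1 \/ mass x = m.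
  by move=> x; have := @cover4 i0 j0 k0 l0 x Hu0 => [[->|[->|[->|->]]]]; auto.
have mpos : forall x, 0 < mass x.
  by move=> x; case: (mval x) => ->.
have Msum : \sum_(i < 4) mass i = mass a + mass b + mass c + mass d := sum4 _ _ Hu4.
have Msum' : \sum_(i < 4) mass i = 1 + 1 + m + m by rewrite (sum4 _ _ Hu0) mi mj mk ml.
have M0 : \sum_(i < 4) mass i != 0 by apply: lt0r_neq0; rewrite Msum'; lra.
have Npos : 0 < sqd (q b) (q a) by rewrite lt0r hN sqd_ge0.
have mcd : mass c = mass d.
  case: (eqVneq (mass c) (mass d)) => [//| hne]; exfalso.
  have Ea := ccL mass q lam a b c d (- (q b 0 1 - q a 0 1)) (q b 0 0 - q a 0 0) Hu4 (Hcc a).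
  rewrite (_ : dist (q d) (q a) = dist (q c) (q a)) in Ea; last by rewrite !distE' hsA.
  have LZa : L (q c) = L (q a) + (L (q c) - L (q a)) by ring.
  have LWa : L (q d) = L (q a) - (L (q c) - L (q a)) by lra.
  have ka := key M0 Msum LbA LZa LWa Ea.
  have Hu' : uniq [:: b; a; c; d] by apply: uniq4; rewrite // eq_sym.
  have Eb := ccL mass q lam b a c d (- (q b 0 1 - q a 0 1)) (q b 0 0 - q a 0 0) Hu' (Hcc b).
  rewrite (_ : dist (q d) (q b) = dist (q c) (q b)) in Eb; last by rewrite !distE' hsB.
  have Msb : \sum_(i < 4) mass i = mass b + mass a + mass c + mass d by rewrite Msum; ring.
  have LZb : L (q c) = L (q b) + (L (q c) - L (q a)) by rewrite LbA; ring.
  have LWb : L (q d) = L (q b) - (L (q c) - L (q a)) by rewrite LbA; lra.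
  have kb := key M0 Msb (esym LbA) LZb LWb Eb.
  have ma0 := lt0r_neq0 (mpos a).
  have mb0 := lt0r_neq0 (mpos b).
  have hne' : mass c - mass d != 0 by rewrite subr_eq0.
  move/eqP: ka; rewrite !mulf_eq0 (negbTE ma0) (negbTE hne') (negbTE tC0) /= subr_eq0 => /eqP ka.
  move/eqP: kb; rewrite !mulf_eq0 (negbTE mb0) (negbTE hne') (negbTE tC0) /= subr_eq0 => /eqP kb.
  rewrite ka in kb.
  have e3 := invr_inj kb.
  have e1 : dist (q c) (q a) = dist (q c) (q b).
    by apply/eqP; rewrite -(@eqrXn2 _ 3) // ?e3 // !distE' sqrtr_ge0.
  have e0 : sqd (q c) (q a) = sqd (q c) (q b).
    by apply/eqP; rewrite -eqr_sqrt ?sqd_ge0 // -!distE' e1.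
  have hc := mid_lf e0.
  have hd : sqd (q d) (q a) = sqd (q d) (q b) by rewrite hsA hsB.
  have hd' := mid_lf hd.
  have hb := LfBA' (q a) (q b).
  case: HT => Ht.
  - have bnd : forall x, x != b ->
        Lf (q b 0 0 - q a 0 0) (q b 0 1 - q a 0 1) (q x) <=
        Lf (q b 0 0 - q a 0 0) (q b 0 1 - q a 0 1) (q a) + sqd (q b) (q a) / 2.
      move=> x xb; have := @cover4 a b c d x Hu4 => [[e|[e|[e|e]]]]; subst x.
      - lra.
      - by rewrite eqxx in xb.
      - lra.
      - lra.
    have := tri_le Ht (bnd _ cb) (bnd _ db) (bnd _ ab).
    lra.
  - have bnd : forall x, x != a ->
        Lf (-1 * (q b 0 0 - q a 0 0)) (-1 * (q b 0 1 - q a 0 1)) (q x) <=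
        - (Lf (q b 0 0 - q a 0 0) (q b 0 1 - q a 0 1) (q a) + sqd (q b) (q a) / 2).
      move=> x xa; rewrite LfS; have := @cover4 a b c d x Hu4 => [[e|[e|[e|e]]]]; subst x.
      - by rewrite eqxx in xa.
      - lra.
      - lra.
      - lra.
    have := tri_le Ht (bnd _ ca) (bnd _ da) (bnd _ (ltac:(by rewrite eq_sym) : b != a)).
    rewrite LfS; lra.
have mab : mass a = mass b.
  have e := Msum; rewrite Msum' in e.
  case: (eqVneq m 1) => m1.
    by case: (mval a) => ->; case: (mval b) => ->; rewrite ?m1.
  have [ea|ea] := mval a; have [eb|eb] := mval b; have [ec|ec] := mval c;
    rewrite ?ea ?eb //; exfalso; move/eqP: m1; apply; lra.
have u1 : uniq [:: c; d; a; b] by apply: uniq4; rewrite // eq_sym.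
case: HT => Ht.
- exists c, d, a, b; do !split => //.
  + by rewrite !distE' (sqdC (q a)) (sqdC (q a)) hsA.
  + by rewrite !distE' (sqdC (q b)) (sqdC (q b)) hsB.
- exists c, d, b, a; do !split => //.
  + by apply: uniq4; rewrite // eq_sym.
  + by rewrite !distE' (sqdC (q b)) (sqdC (q b)) hsB.
  + by rewrite !distE' (sqdC (q a)) (sqdC (q a)) hsA.
Qed.
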